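(* Let $m=2k+1$ with $k\in\mathbb{N}$ and $\beta\in(1,k+2)$. For $i\in\{1,\ldots,k\}$ the fixed point $\frac{i}{\beta-1}$ of $T_{\beta,i}$ lies in the interior of $[\frac{i}{\beta},\frac{(i-1)\beta+m-(i-1)}{\beta(\beta-1)}]$, and for $i\in\{k+1,\ldots,m-1\}$ it lies in the interior of $[\frac{i+1}{\beta},\frac{i\beta+m-i}{\beta(\beta-1)}]$.
   Context: $T_{\beta,i}(x)=\beta x-i$. *)

(* Defs.v *)
From mathcomp Require Import all_boot all_order all_algebra.
Set Implicit Arguments. Unset Strict Implicit. Unset Printing Implicit Defensive.
Import Order.TTheory GRing.Theory Num.Theory.
Local Open Scope ring_scope.

Definition T {R : ringType} (beta : R) (i : nat) (x : R) : R := beta * x - i%:R.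

(* Main.v *)
Require Import Defs.
From mathcomp Require Import all_boot all_order all_algebra.
From mathcomp Require Import zify ring lra.
Import Order.TTheory GRing.Theory Num.Theory.
Local Open Scope ring_scope.

Lemma cmp_frac (R : realFieldType) (b : R) (a c : R) :
  1 < b -> a * b < c -> a / (b - 1) < c / (b * (b - 1)).
Proof.
move=> hb hac.
have hb1 : 0 < b - 1 by rewrite subr_gt0.
have hb0 : 0 < b by lra.
have -> : a / (b - 1) = (a * b) / (b * (b - 1)).
  by field; rewrite ?gt_eqF // mulf_neq0 ?gt_eqF.
by rewrite ltr_pM2r // invr_gt0 mulr_gt0.
Qed.

Lemma cmp_frac2 (R : realFieldType) (b : R) (a c : R) :
  1 < b -> a * (b - 1) < c * b -> a / b < c / (b - 1).
Proof.
move=> hb hac.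
have hb1 : 0 < b - 1 by rewrite subr_gt0.
have hb0 : 0 < b by lra.
rewrite ltr_pdivrMr // mulrAC ltr_pdivlMr //.
Qed.

Theorem lemma3p3 (R : realFieldType) (k : nat) (beta : R) :
  let m := (2 * k + 1)%N in
  1 < beta -> beta < (k + 2)%:R ->
  (forall i : nat, (1 <= i <= k)%N ->
     T beta i (i%:R / (beta - 1)) = i%:R / (beta - 1) /\
     i%:R / (beta - 1) \in
       `] i%:R / beta,
          ((i - 1)%:R * beta + (m - (i - 1))%:R) / (beta * (beta - 1)) [) /\
  (forall i : nat, (k + 1 <= i <= m - 1)%N ->
     T beta i (i%:R / (beta - 1)) = i%:R / (beta - 1) /\
     i%:R / (beta - 1) \in
       `] (i + 1)%:R / beta,
          (i%:R * beta + (m - i)%:R) / (beta * (beta - 1)) [).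
Proof.
move=> m hb hbk.
have hb1 : beta - 1 != 0 by rewrite subr_eq0 gt_eqF.
have hfix : forall i : nat, T beta i (i%:R / (beta - 1)) = i%:R / (beta - 1).
  by move=> i; rewrite /T; field.
rewrite natrD in hbk.
have hi0 : forall i : nat, (0 : R) <= i%:R by move=> i; rewrite ler0n.
split=> i /andP [h1 h2]; split => //; rewrite in_itv /=; apply/andP; split.
- apply: cmp_frac2 => //. have : (1 <= i%:R :> R) by rewrite ler1n. nra.
- apply: cmp_frac => //.
  have -> : ((i - 1)%:R = i%:R - 1 :> R) by rewrite natrB.
  have -> : ((m - (i - 1))%:R = 2 * k%:R + 2 - i%:R :> R).
    have -> : (m - (i - 1) = (2 * k + 2) - i)%N by rewrite /m; lia.
    rewrite natrB; last lia. by rewrite natrD natrM.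
  have : (i%:R <= k%:R :> R) by rewrite ler_nat.
  nra.
- apply: cmp_frac2 => //.
  have : ((k + 1)%:R <= i%:R :> R) by rewrite ler_nat.
  rewrite natrD. nra.
- apply: cmp_frac => //.
  have : (i%:R + 1 <= m%:R :> R).
    have hh : (i + 1 <= m)%N by rewrite /m in h2 *; lia. by move: hh; rewrite -(ler_nat R) natrD.
  have -> : ((m - i)%:R = m%:R - i%:R :> R).
    by rewrite natrB //; rewrite /m in h2 *; lia.
  nra.
Qed.
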